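(* Let $m \ge 1$ be an integer. Let $(h(n))_{n\ge 1}$ be the non-decreasing sequence of non-negative integers with $h(1)=0$ in which, for each integer $k\ge 0$, the value $k$ appears exactly $mk+1$ times. Let $(a(n))_{n\ge1}$ be the sequence of positive integers defined by $a(1)=1$ and the nested recurrence $$a(n+1) = n - a^{(m)}(n) + a^{(m+1)}(n) \qquad (n\ge 1).$$ Then $a(n) = n - h(n)$ for all $n \ge 1$, and this is the unique sequence satisfying the recurrence with $a(1)=1$.
   Context: For a function $f$ on the positive integers, the iterates are defined by $f^{(0)}(n)=n$ and $f^{(j+1)}(n)=f(f^{(j)}(n))$; thus $a^{(m)}(n)$ denotes $a$ applied $m$ times to $n$. Equivalently, $h(n)=k$ if and only if $T^{\star}_k \le n < T^{\star}_{k+1}$, where $T^{\star}_k = 1 + m\binom{k}{2} + k$ for $k\ge 0$. *)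

(* Defs.v *)
From mathcomp Require Import all_boot all_order all_algebra.
Set Implicit Arguments. Unset Strict Implicit. Unset Printing Implicit Defensive.

Definition Tstar (m k : nat) : nat := 1 + m * 'C(k, 2) + k.

Definition nested_solution (m : nat) (a : nat -> nat) : Prop :=
  a 1 = 1 /\
  (forall n, 1 <= n -> 1 <= a n) /\
  (forall n, 1 <= n ->
     ((a n.+1)%:Z = n%:Z - (iter m a n)%:Z + (iter m.+1 a n)%:Z)%R).

(* Main.v *)
Require Import Defs.
From mathcomp Require Import all_boot all_order all_algebra.
From mathcomp Require Import zify.
Set Implicit Arguments. Unset Strict Implicit. Unset Printing Implicit Defensive.

Definition HH (m : nat) (h : nat -> nat) :=
  forall n k, 1 <= n -> (h n = k <-> Tstar m k <= n < Tstar m k.+1).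

Lemma TS m k : Tstar m k.+1 = Tstar m k + m*k + 1.
Proof. rewrite /Tstar binS bin1. lia. Qed.

Lemma Tge m k : k < Tstar m k.
Proof. rewrite /Tstar; lia. Qed.

Lemma hblk m h n : HH m h -> 1 <= n -> Tstar m (h n) <= n < Tstar m (h n).+1.
Proof. move=> H hn; by apply/(H n (h n) hn). Qed.

Lemma hval m h n k : HH m h -> Tstar m k <= n < Tstar m k.+1 -> h n = k.
Proof.
move=> H Hb; have := Tge m k => Hk.
apply/(H n k) => //; lia.
Qed.

Lemma L1 m h : HH m h -> forall j n k, Tstar m k + j*k <= n < Tstar m k.+1 ->
  iter j (fun n => n - h n) n = n - j*k.
Proof.
move=> H; elim=> [|j IH] n k Hn; first by rewrite /=; lia.
rewrite iterSr /= (hval (k:=k) H); last lia.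
rewrite (IH _ k); lia.
Qed.

Lemma Lmain m h n : 1 <= m -> HH m h -> 1 <= n ->
  h n.+1 = (h (iter m (fun n => n - h n) n)).+1.
Proof.
move=> hm H hn; set g := fun n => n - h n.
have := hblk H hn; move Ek0: (h n) => k Hb.
have TSk := TS m k; have TSk1 := TS m k.+1.
case: (ltnP n.+1 (Tstar m k.+1)) => Hc; last first.
  rewrite (hval (k:=k.+1) H); last lia.
  rewrite (L1 H (k:=k)); last lia.
  rewrite (hval (k:=k) H) //; lia.
rewrite (hval (k:=k) H); last lia.
case Ek: k Hb TSk Hc => [|k'] Hb TSk Hc.
  have : Tstar m 0 = 1 by rewrite /Tstar bin0n /=; lia.
  lia.
have TSk' := TS m k'.
set r := n - Tstar m k'.+1.
have Hrd : r = n - Tstar m k'.+1 by [].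
have Hr := divn_eq r k'.+1.
have Hs := ltn_pmod r (ltn0Sn k').
set q := r %/ k'.+1 in Hr *; set s := r %% k'.+1 in Hr Hs *.
have Hq : q < m.
  have : q * k'.+1 < m * k'.+1 by lia.
  by rewrite ltn_pmul2r.
have E1 : q * k'.+1 = q * k' + q by rewrite mulnS addnC.
have E3 : m * k'.+1 = m * k' + m by rewrite mulnS addnC.
have E2 : (m - q.+1) * k' + q * k' + k' = m * k'.
  have e : (m - q.+1) + q + 1 = m by lia.
  by rewrite -{2}e !mulnDl mul1n.
have Hm : iter m g n = iter (m - q.+1) g (iter q.+1 g n) by rewrite -iterD subnK.
rewrite Hm iterS.
rewrite (L1 H (k:=k'.+1) (j:=q) (n:=n)); last lia.
rewrite /g (hval (k:=k'.+1) (n:=n - q * k'.+1) H); last lia.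
rewrite -/g (L1 H (k:=k')); last lia.
rewrite (hval (k:=k') H) //. clearbody q s r. move: E1 E2 E3 Hr Hrd Hs Hb TSk TSk' Hc hm. set A := q * k'.+1. set B := (m - q.+1) * k'. set C := q * k'. set D := m * k'. set F := m * k'.+1. clearbody A B C D F. set T0 := Tstar m k'. set T1 := Tstar m k'.+1. set T2 := Tstar m k'.+2. clearbody T0 T1 T2. lia.
Qed.

Lemma g_ge1 m h n : HH m h -> 1 <= n -> 1 <= n - h n <= n.
Proof. move=> H hn; have := hblk H hn; have := Tge m (h n); lia. Qed.

Lemma iter_ge1 m h n : HH m h -> 1 <= n ->
  forall j, 1 <= iter j (fun n => n - h n) n <= n.
Proof.
move=> H hn; elim=> [|j IH] /=; first lia.
have := g_ge1 H (n := iter j (fun n => n - h n) n); lia.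
Qed.

Lemma h1 m h : HH m h -> h 1 = 0.
Proof.
move=> H; apply: (hval H).
have := TS m 0; have : Tstar m 0 = 1 by rewrite /Tstar bin0n /=; lia.
lia.
Qed.

Lemma exist_sol m h : 1 <= m -> HH m h -> nested_solution m (fun n => n - h n).
Proof.
move=> hm H; split; first by rewrite /= (h1 H).
split; first by move=> n hn; have := g_ge1 H hn; lia.
move=> n hn; rewrite iterS.
have Hr := Lmain hm H hn.
have := iter_ge1 H hn m.
set b := iter m _ n => hb.
have := g_ge1 H (n:=b) (proj1 (andP hb)); have := g_ge1 H (ltn0Sn n).
rewrite /= Hr -/b; clearbody b; lia.
Qed.

Theorem mainTheorem1 (m : nat) (hm : 1 <= m) (h : nat -> nat)
  (hh : forall n k, 1 <= n -> (h n = k <-> Tstar m k <= n < Tstar m k.+1)) :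
  nested_solution m (fun n => n - h n) /\
  (forall a : nat -> nat, nested_solution m a ->
     forall n, 1 <= n -> a n = n - h n).
Proof.
have H : HH m h by [].
split; first exact: exist_sol.
move=> a [a1 [apos arec]].
suff S : forall N x, 1 <= x <= N -> a x = x - h x.
  by move=> n hn; apply: (S n); lia.
elim=> [|N IH] x hx; first lia.
case: (ltnP x N.+1) => hxN; first by apply: IH; lia.
have -> : x = N.+1 by lia.
case: N IH {hx hxN} => [|N] IH; first by rewrite a1 (h1 H).
have Hit : forall j, iter j a N.+1 = iter j (fun n => n - h n) N.+1.
  elim=> [|j IHj] //=; rewrite IHj IH //.
  have := iter_ge1 H (ltn0Sn N) j; lia.
have := arec N.+1 isT; rewrite !Hit.
have [_ [_ Eg]] := exist_sol hm H.
rewrite -(Eg N.+1 isT) /=.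
by case.
Qed.
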